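(* Assume Conditions (i), (ii), (iii). For $s\in S^1$ let $X_s^\omega=X^\omega\cap(\{s\}\times Y^\omega)$; for each connected component $G_s^\omega$ of $X_s^\omega$ let $|G_s^\omega|$ be its largest radius, and let $|G^\omega|$ be the supremum of $|G_s^\omega|$ over all $s\in S^1$ and all connected components $G_s^\omega$ of $X_s^\omega$. Then for every $l>0$, $P(\{\omega:|G^\omega|\ge l\})=0$.
   Context: Setting. $(\Omega,\mathcal F,P,(\theta_t)_{t\in\mathbb R})$ is a metric dynamical system: each $\theta_t:\Omega\to\Omega$ is measurable and $P$-preserving, $\theta_0=\mathrm{id}$, $\theta_{t+u}=\theta_t\circ\theta_u$. $S^1=\mathbb R/\mathbb Z$; distances $|s-s'|$ and intervals $[s-\delta,s+\delta]$ on $S^1$ are taken in the lifted real coordinate. A $C^1$ perfect cocycle is a measurable map $\gamma:\mathbb R\times\Omega\times(S^1\times\mathbb R^d)\to S^1\times\mathbb R^d$, $(t,\omega,z)\mapsto \gamma^\omega_z(t)=\gamma^\omega(t)z$, such that for every $\omega$: $\gamma^\omega(0)=\mathrm{id}$; $\gamma^\omega_z(t_1+t_2)=\gamma^{\theta_{t_1}\omega}_{\gamma^\omega_z(t_1)}(t_2)$ for all $z$, $t_1,t_2$; $(t,z)\mapsto\gamma^\omega_z(t)$ is continuous; each $\gamma^\omega(t)$ is a $C^1$ diffeomorphism. Throughout, $\gamma$ is a $C^1$ perfect cocycle. Condition (i): there are a random compact set $\omega\mapsto Y^\omega\subset\mathbb R^d$ and $t_1>0$ such that for all $s\in S^1$,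 $y\in Y^\omega$, writing $\gamma^\omega_{(s,y)}(t_1)=(s',y')$, the continuous lift of the $S^1$-coordinate along $t\mapsto\gamma^\omega_{(s,y)}(t)$, $t\in[0,t_1]$, increases by exactly $1$ (i.e. $s'=s+1$ in the lift), and $y'\in Y^{\theta_{t_1}\omega}$; moreover there is a random compact set $X^\omega\subset S^1\times Y^\omega$ with $\gamma^\omega(t)X^\omega=X^{\theta_t\omega}$ for all $t\in\mathbb R$, whose projection onto $S^1$ is all of $S^1$, and whose diameter in the $y$-direction is less than a constant $b^*>0$. Notation. $\hat\theta=\theta_{t_1}$ and $\hat\theta^k$ is its $k$-fold iterate ($k\in\mathbb Z$). $H^\omega(s,y):=\gamma^\omega_{(s,y)}(t_1)=(h(s)\bmod 1,g^\omega(s,y))$ with $h(s)=s+1$; $H^{(n),\omega}:=H^{\hat\theta^{n-1}\omega}\circ\dots\circ H^\omega=(h^{(n)}(s)\bmod1,g^{(n),\omega}(s,y))$. Condition (ii): there are $\delta_1>0$, $L_1>0$ such that for every $(s,y)\in X^\omega$ there is a Lipschitz function $f:S^1\to\mathbb R^d$ with constant $L_1$, $f(s)=y$, and $(s^\#,f(s^\#))\in X^\omega$ for all $s^\#\in[s-\delta_1,s+\delta_1]$. For $\varepsilon>0$, $B(X^\omega,\varepsilon):=\{(s,y'):\exists (s,y)\in X^\omega,\ \|y'-y\|\le\varepsilon\}$. Condition (iii): there are $\lambda<1$, $\varepsilon_1>0$, $n_0\in\mathbb N$ such that for a.e. $\omega$, $\|D_yg^{(n_0),\omega}(s,y)\|\le\lambda$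 for all $(s,y)\in B(X^\omega,\varepsilon_1)$, and $c:=\operatorname{ess\,sup}_\omega\sup_{(s,y)\in B(X^\omega,\varepsilon_1)}\|\partial_s g^{(n_0),\omega}(s,y)\|<\infty$. *)

(* Defs.v *)
From HB Require Import structures.
From mathcomp Require Import all_boot all_order all_algebra.
From mathcomp Require Import all_classical all_reals all_analysis.
Set Implicit Arguments. Unset Strict Implicit. Unset Printing Implicit Defensive.
Import Order.TTheory GRing.Theory Num.Theory.
Import numFieldNormedType.Exports.
Local Open Scope classical_set_scope.
Local Open Scope ring_scope.

(* Points of the (lifted) cylinder S^1 x R^d : first coordinate is the lifted
   real coordinate of S^1 = R/Z, second coordinate is in R^d = 'rV_d.  All sets
   and maps on S^1 x R^d are represented by their 1-periodic lifts. *)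
Definition Pt (R : realType) (d : nat) := (R * 'rV[R]_d)%type.

Definition enorm (R : realType) (d : nat) (v : 'rV[R]_d) : R :=
  Num.sqrt (\sum_(i < d) (v ord0 i) ^+ 2).

Definition metric_dynamical_system (R : realType) (dO : measure_display)
    (Omega : measurableType dO) (P : probability Omega R)
    (theta : R -> Omega -> Omega) : Prop :=
  (forall t, measurable_fun setT (theta t)) /\
  (forall t (A : set Omega), measurable A -> P (theta t @^-1` A) = P A) /\
  (forall w, theta 0 w = w) /\
  (forall t u w, theta (t + u) w = theta t (theta u w)).

Definition C1map (R : realType) (d : nat) (f : Pt R d -> Pt R d) : Prop :=
  (forall x : Pt R d, differentiable f x) /\
  (forall v : Pt R d, continuous (fun x : Pt R d => 'D_v f x)).

Definition C1_diffeo (R : realType) (d : nat) (f : Pt R d -> Pt R d) : Prop :=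
  exists g : Pt R d -> Pt R d,
    cancel f g /\ cancel g f /\ C1map f /\ C1map g.

(* C^1 perfect cocycle over theta on S^1 x R^d, given through its canonical
   continuous lift Gam (Gam 0 = id, equivariant under s |-> s + 1). *)
Definition C1_perfect_cocycle (R : realType) (d : nat) (dO : measure_display)
    (Omega : measurableType dO) (theta : R -> Omega -> Omega)
    (Gam : R -> Omega -> Pt R d -> Pt R d) : Prop :=
  (* measurability (in omega, for fixed (t,z); joint measurability follows by
     continuity in (t,z)) *)
  (forall t (z : Pt R d),
      measurable_fun setT (fun w => (Gam t w z).1) /\
      forall i : 'I_d, measurable_fun setT (fun w => (Gam t w z).2 ord0 i)) /\
  (forall w z, Gam 0 w z = z) /\
  (forall w z t1 t2, Gam (t1 + t2) w z = Gam t2 (theta t1 w) (Gam t1 w z)) /\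
  (forall w, continuous (fun q : R * Pt R d => Gam q.1 w q.2)) /\
  (forall w t, C1_diffeo (Gam t w)) /\
  (* the map descends to S^1 x R^d *)
  (forall t w s y, Gam t w (s + 1, y) = ((Gam t w (s, y)).1 + 1, (Gam t w (s, y)).2)).

Definition dist_rv (R : realType) (d : nat) (x : 'rV[R]_d) (K : set 'rV[R]_d) : R :=
  inf [set enorm (x - k) | k in K].

(* distance in S^1 x R^d, computed on the periodic lift A *)
Definition dist_cyl (R : realType) (d : nat) (z : Pt R d) (A : set (Pt R d)) : R :=
  inf [set Num.max `|z.1 - p.1| (enorm (z.2 - p.2)) | p in A].

Definition random_compact_rv (R : realType) (d : nat) (dO : measure_display)
    (Omega : measurableType dO) (Y : Omega -> set 'rV[R]_d) : Prop :=
  (forall w, Y w !=set0 /\ compact (Y w)) /\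
  (forall x : 'rV[R]_d, measurable_fun setT (fun w => dist_rv x (Y w))).

(* 1-periodic subsets of R x R^d = lifts of subsets of S^1 x R^d *)
Definition periodic_set (R : realType) (d : nat) (A : set (Pt R d)) : Prop :=
  forall s y, A (s + 1, y) <-> A (s, y).

(* random compact set in S^1 x R^d (given by its lift): the lift is periodic,
   closed and meets the fundamental strip [0,1] x R^d in a compact set *)
Definition random_compact_cyl (R : realType) (d : nat) (dO : measure_display)
    (Omega : measurableType dO) (X : Omega -> set (Pt R d)) : Prop :=
  (forall w, X w !=set0 /\ periodic_set (X w) /\ closed (X w) /\
     compact (X w `&` [set p | 0 <= p.1 <= 1])) /\
  (forall z : Pt R d, measurable_fun setT (fun w => dist_cyl z (X w))).

Fixpoint Hn (R : realType) (d : nat) (Omega : Type) (theta : R -> Omega -> Omega)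
    (Gam : R -> Omega -> Pt R d -> Pt R d) (t1 : R) (n : nat) (w : Omega)
    : Pt R d -> Pt R d :=
  match n with
  | 0 => id
  | n'.+1 => Gam t1 (iter n' (theta t1) w) \o Hn theta Gam t1 n' w
  end.

Definition gn (R : realType) (d : nat) (Omega : Type) (theta : R -> Omega -> Omega)
    (Gam : R -> Omega -> Pt R d -> Pt R d) (t1 : R) (n : nat) (w : Omega)
    (p : Pt R d) : 'rV[R]_d :=
  (Hn theta Gam t1 n w p).2.

Definition Dy (R : realType) (d : nat) (f : Pt R d -> 'rV[R]_d) (p : Pt R d)
    (v : 'rV[R]_d) : 'rV[R]_d :=
  'D_((0, v) : Pt R d) f p.

Definition Ds (R : realType) (d : nat) (f : Pt R d -> 'rV[R]_d) (p : Pt R d)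
    : 'rV[R]_d :=
  'D_((1, 0) : Pt R d) f p.

Definition Bnbhd (R : realType) (d : nat) (A : set (Pt R d)) (eps : R) : set (Pt R d) :=
  [set p | exists y, A (p.1, y) /\ enorm (p.2 - y) <= eps].

Definition cond_i (R : realType) (d : nat) (dO : measure_display)
    (Omega : measurableType dO) (theta : R -> Omega -> Omega)
    (Gam : R -> Omega -> Pt R d -> Pt R d)
    (Y : Omega -> set 'rV[R]_d) (X : Omega -> set (Pt R d)) (t1 bstar : R) : Prop :=
  random_compact_rv Y /\ 0 < t1 /\
  (forall w s y, Y w y ->
      (Gam t1 w (s, y)).1 = s + 1 /\ Y (theta t1 w) (Gam t1 w (s, y)).2) /\
  random_compact_cyl X /\
  (forall w s y, X w (s, y) -> Y w y) /\
  (forall t w, Gam t w @` X w = X (theta t w)) /\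
  (forall w s, exists y, X w (s, y)) /\
  0 < bstar /\
  (forall w p q, X w p -> X w q -> enorm (p.2 - q.2) < bstar).

Definition cond_ii (R : realType) (d : nat) (Omega : Type)
    (X : Omega -> set (Pt R d)) (delta1 L1 : R) : Prop :=
  0 < delta1 /\ 0 < L1 /\
  forall w s y, X w (s, y) ->
    exists f : R -> 'rV[R]_d,
      (forall a, f (a + 1) = f a) /\
      (forall a b, enorm (f a - f b) <= L1 * `|a - b|) /\
      f s = y /\
      (forall s', s - delta1 <= s' <= s + delta1 -> X w (s', f s')).

Definition cond_iii (R : realType) (d : nat) (dO : measure_display)
    (Omega : measurableType dO) (P : probability Omega R)
    (theta : R -> Omega -> Omega) (Gam : R -> Omega -> Pt R d -> Pt R d)
    (X : Omega -> set (Pt R d)) (t1 lam eps1 : R) (n0 : nat) : Prop :=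
  lam < 1 /\ 0 < eps1 /\
  {ae P, forall w, forall p, Bnbhd (X w) eps1 p ->
      forall v : 'rV[R]_d,
        enorm (Dy (gn theta Gam t1 n0 w) p v) <= lam * enorm v} /\
  (exists c : R, {ae P, forall w, forall p, Bnbhd (X w) eps1 p ->
      enorm (Ds (gn theta Gam t1 n0 w) p) <= c}).

Definition fiber (R : realType) (d : nat) (A : set (Pt R d)) (s : R) : set 'rV[R]_d :=
  [set y | A (s, y)].

Definition largest_radius (R : realType) (d : nat) (G : set 'rV[R]_d) : \bar R :=
  ereal_sup [set r | exists y y', G y /\ G y' /\ r = ((enorm (y - y')) / 2)%:E].

Definition Gsize (R : realType) (d : nat) (A : set (Pt R d)) : \bar R :=
  ereal_sup [set r | exists s y, A (s, y) /\
      r = largest_radius (connected_component (fiber A s) y)].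

(* Main.v *)
Require Import Defs.
From HB Require Import structures.
From mathcomp Require Import all_boot all_order all_algebra.
From mathcomp Require Import all_classical all_reals all_analysis.
From mathcomp Require Import ring lra.
Set Implicit Arguments. Unset Strict Implicit. Unset Printing Implicit Defensive.
Import Order.TTheory GRing.Theory Num.Theory.
Import numFieldNormedType.Exports.
Local Open Scope classical_set_scope.
Local Open Scope ring_scope.
Section Enorm.
Context {R : realType} {d : nat}.
Implicit Types a b v : 'rV[R]_d.

Definition dotv a b : R := \sum_(i < d) a ord0 i * b ord0 i.

Lemma dotv_ge0 a : 0 <= dotv a a.
Proof. by apply: sumr_ge0 => i _; rewrite -expr2 sqr_ge0. Qed.

Lemma enormE a : enorm a = Num.sqrt (dotv a a).
Proof. by rewrite /enorm /dotv; congr Num.sqrt; apply: eq_bigr => i _; rewrite expr2. Qed.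

Lemma enorm_ge0 a : 0 <= enorm a.
Proof. exact: sqrtr_ge0. Qed.

Lemma enorm_sq a : enorm a ^+ 2 = dotv a a.
Proof. by rewrite enormE sqr_sqrtr // dotv_ge0. Qed.

Lemma dotvC a b : dotv a b = dotv b a.
Proof. by apply: eq_bigr => i _; rewrite mulrC. Qed.

Lemma prod_sums (F G : 'I_d -> R) :
  \sum_(i < d) \sum_(j < d) F i * G j = (\sum_(i < d) F i) * (\sum_(j < d) G j).
Proof. by rewrite mulr_suml; apply: eq_bigr => i _; rewrite mulr_sumr. Qed.

Lemma CS a b : dotv a b ^+ 2 <= dotv a a * dotv b b.
Proof.
have H : 0 <= \sum_(i < d) \sum_(j < d) (a ord0 i * b ord0 j - a ord0 j * b ord0 i) ^+ 2.
  by apply: sumr_ge0 => i _; apply: sumr_ge0 => j _; exact: sqr_ge0.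
have E : \sum_(i < d) \sum_(j < d) (a ord0 i * b ord0 j - a ord0 j * b ord0 i) ^+ 2
   = 2 * (dotv a a * dotv b b) - 2 * dotv a b ^+ 2.
  transitivity (\sum_(i < d) \sum_(j < d)
     ((a ord0 i * a ord0 i) * (b ord0 j * b ord0 j) + (b ord0 i * b ord0 i) * (a ord0 j * a ord0 j)
      - 2 * ((a ord0 i * b ord0 i) * (a ord0 j * b ord0 j)))).
    by apply: eq_bigr => i _; apply: eq_bigr => j _; ring.
  under eq_bigr do rewrite sumrB big_split /=.
  rewrite sumrB big_split /= !prod_sums.
  under [X in _ - X]eq_bigr do rewrite -mulr_sumr.
  rewrite -mulr_sumr prod_sums /dotv; ring.
by have := H; rewrite E subr_ge0 ler_pM2l // ltr0n.
Qed.

Lemma dotv_le a b : dotv a b <= enorm a * enorm b.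
Proof.
have [h|h] := leP (dotv a b) 0.
  by apply: le_trans h _; rewrite mulr_ge0 // enorm_ge0.
rewrite -(ler_pXn2r (_ : 0 < 2)%N) ?nnegrE ?(ltW h) ?mulr_ge0 ?enorm_ge0 //.
by rewrite exprMn !enorm_sq CS.
Qed.

Lemma dotvDl a b v : dotv (a + b) v = dotv a v + dotv b v.
Proof. by rewrite /dotv -big_split; apply: eq_bigr => i _; rewrite mxE mulrDl. Qed.

Lemma dotvNl a v : dotv (- a) v = - dotv a v.
Proof. by rewrite /dotv -sumrN; apply: eq_bigr => i _; rewrite mxE mulNr. Qed.

Lemma enorm_triangle a b : enorm (a + b) <= enorm a + enorm b.
Proof.
rewrite -(ler_pXn2r (_ : 0 < 2)%N) ?nnegrE ?addr_ge0 ?enorm_ge0 //.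
rewrite enorm_sq dotvDl !(dotvC _ (a + b)) !dotvDl -!enorm_sq (dotvC b a).
have := dotv_le a b; rewrite sqrrD => h.
rewrite !expr2 in h *; nra.
Qed.

Lemma enormN a : enorm (- a) = enorm a.
Proof. by rewrite /enorm; congr Num.sqrt; apply: eq_bigr => i _; rewrite mxE sqrrN. Qed.

Lemma enormB a b : enorm (a - b) = enorm (b - a).
Proof. by rewrite -enormN opprB. Qed.

Lemma enorm0 : enorm (0 : 'rV[R]_d) = 0.
Proof. by rewrite /enorm big1 ?sqrtr0 // => i _; rewrite mxE expr0n. Qed.

Lemma enormZ (c : R) a : enorm (c *: a) = `|c| * enorm a.
Proof.
rewrite /enorm -sqrtr_sqr -sqrtrM ?sqr_ge0 //; congr Num.sqrt.
by rewrite mulr_sumr; apply: eq_bigr => i _; rewrite mxE exprMn.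
Qed.

Lemma enorm_triangle3 a b v : enorm (a - v) <= enorm (a - b) + enorm (b - v).
Proof.
have E : a - v = (a - b) + (b - v) by rewrite addrA subrK.
by rewrite {1}E; exact: enorm_triangle.
Qed.

Lemma coord_le_enorm a i : `|a ord0 i| <= enorm a.
Proof.
rewrite /enorm -sqrtr_sqr ler_sqrt; last by apply: sumr_ge0 => j _; exact: sqr_ge0.
rewrite (bigD1 i) //= lerDl.
by apply: sumr_ge0 => j _; exact: sqr_ge0.
Qed.

Lemma sum_sq_le (n : nat) (F : 'I_n -> R) : (forall i, 0 <= F i) ->
  \sum_(i < n) F i ^+ 2 <= (\sum_(i < n) F i) ^+ 2.
Proof.
elim: n F => [|n IH] F F0; first by rewrite !big_ord0 expr0n lexx.
rewrite !big_ord_recr /=.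
have h1 := IH (fun i => F (widen_ord (leqnSn n) i)) (fun i => F0 _).
have h2 : 0 <= \sum_(i < n) F (widen_ord (leqnSn n) i) by apply: sumr_ge0.
have h3 := F0 ord_max.
rewrite !expr2 in h1 *; nra.
Qed.

Lemma enorm_le_sum a : enorm a <= \sum_(i < d) `|a ord0 i|.
Proof.
have h0 : 0 <= \sum_(i < d) `|a ord0 i| by apply: sumr_ge0.
rewrite -(ler_pXn2r (_ : 0 < 2)%N) ?nnegrE ?enorm_ge0 //.
rewrite /enorm sqr_sqrtr; last by apply: sumr_ge0 => j _; exact: sqr_ge0.
have := @sum_sq_le d (fun i => `|a ord0 i|) (fun i => normr_ge0 _).
congr (_ <= _); apply: eq_bigr => i _; by rewrite real_normK ?num_real.
Qed.

End Enorm.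
Section MVT_enorm.
Context {R : realType} {d : nat}.

Lemma mvt_enorm (f : R -> 'rV[R]_d) (K : R) : 0 <= K ->
  (forall t, derivable f t 1) ->
  (forall t, 0 <= t <= 1 -> enorm ('D_1 f t) <= K) ->
  enorm (f 1 - f 0) <= K.
Proof.
move=> K0 fd fK.
set u := f 1 - f 0.
have gd i t : derivable (fun t => f t ord0 i) t 1 by move: (fd t) => /derivable_mxP; apply.
pose h i := fun t : R => u ord0 i *: f t ord0 i.
pose psi := \sum_(i < d) h i.
have psiE t : psi t = \sum_(i < d) u ord0 i * f t ord0 i.
  by rewrite /psi fct_sumE.
pose df t := \sum_(i < d) u ord0 i * 'D_1 (fun t => f t ord0 i) t.
have hder (t : R) : is_derive t (1:R) psi (df t).
  apply: is_derive_sum => i.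
  apply: is_deriveZ; apply: derivableP; exact: gd.
have psic : {within `[0, 1], continuous psi}.
  apply: continuous_subspaceT => t.
  apply: differentiable_continuous; apply/derivable1_diffP.
  by have [] := hder t.
have [c cI E] := MVT_segment ler01 (fun t _ => hder t) psic.
move: cI; rewrite in_itv /= => /andP[c0 c1].

have E1 : psi 1 - psi 0 = enorm u ^+ 2.
  rewrite !psiE -sumrB enorm_sq /dotv; apply: eq_bigr => i _.
  by rewrite -mulrBr; congr (_ * _); rewrite /u !mxE.
have E2 : df c = dotv ('D_1 f c) u.
  rewrite /df /dotv (derive_mx (fd c)); apply: eq_bigr => i _.
  by rewrite [RHS]mulrC !mxE.
rewrite E E2 subr0 mulr1 in E1.
have := dotv_le ('D_1 f c) u; rewrite E1 => h1.
have h2 := fK c.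
have : enorm u ^+ 2 <= K * enorm u.
  apply: le_trans h1 _; rewrite ler_wpM2r ?enorm_ge0 //; by apply: h2; rewrite c0.
have hu := enorm_ge0 u.
rewrite expr2 => h3.
have [hz|hp] := eqVneq (enorm u) 0; first by rewrite hz.
have hp' : 0 < enorm u by rewrite lt_def hp hu.
by rewrite -(ler_pM2r hp').
Qed.

End MVT_enorm.
Section Chain.
Context {R : realType} {d : nat}.

Lemma coord_le_mxnorm (M : 'rV[R]_d) i : `|M ord0 i| <= `|M|.
Proof.
rewrite [leRHS]/Num.Def.normr/= mx_normrE.
by apply: le_trans (le_bigmax _ _ (ord0, i)).
Qed.

Lemma ball_enorm (y z : 'rV[R]_d) r : ball y r z -> enorm (z - y) <= d%:R * r.
Proof.
rewrite mx_norm_ball /ball_ /= => h.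
rewrite enormB; apply: le_trans (enorm_le_sum _) _.
apply: le_trans (_ : \sum_(i < d) r <= _).
  apply: ler_sum => i _.
  exact: ltW (le_lt_trans (coord_le_mxnorm _ _) h).
by rewrite sumr_const card_ord mulr_natl.
Qed.

Context (K : set 'rV[R]_d) (rho eps : R).

Definition hh := eps / (2 * (d.+1)%:R).
Definition Ncell := Num.truncn (2 * rho / hh).
Definition cellT := {ffun 'I_d -> 'I_(Ncell.+1)}.
Definition cell (z : 'rV[R]_d) : cellT :=
  [ffun i => inord (Num.truncn ((z ord0 i + rho) / hh))].

Hypothesis eps0 : 0 < eps.
Hypothesis Kb : forall z, K z -> forall i, `|z ord0 i| <= rho.

Lemma hh_gt0 : 0 < hh.
Proof. by rewrite /hh divr_gt0 // mulr_gt0 // ltr0n. Qed.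

Lemma cell_close z z' : K z -> K z' -> cell z = cell z' -> enorm (z - z') <= eps / 2.
Proof.
move=> Kz Kz' E.
have hpos := hh_gt0.
have ci i : `|z ord0 i - z' ord0 i| <= hh.
  have /ffunP /(_ i) := E; rewrite /cell !ffunE => /(congr1 val).
  have bnd (x : 'rV[R]_d) : K x -> (Num.truncn ((x ord0 i + rho) / hh) < Ncell.+1)%N.
    move=> Kx; rewrite ltnS; apply: le_truncn.
    rewrite ler_pM2r ?invr_gt0 //.
    have := Kb Kx i; rewrite ler_norml => /andP[h1 h2]; lra.
  rewrite /= !inordK ?bnd // => Et.
  have ge0 (x : 'rV[R]_d) : K x -> 0 <= (x ord0 i + rho) / hh.
    move=> Kx; rewrite divr_ge0 ?(ltW hpos) //.
    have := Kb Kx i; rewrite ler_norml => /andP[h1 h2]; lra.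
  have := truncn_itv (ge0 _ Kz); have := truncn_itv (ge0 _ Kz'); rewrite Et.
  move=> /andP[a1 a2] /andP[b1 b2].
  set T := (Num.truncn _)%:R in a1 a2 b1 b2.
  have hd : `|(z ord0 i + rho) / hh - (z' ord0 i + rho) / hh| <= 1.
    rewrite ler_norml; rewrite -natr1 in a2 b2. apply/andP; split; lra.
  rewrite -mulrBl in hd.
  have -> : z ord0 i - z' ord0 i = (z ord0 i + rho - (z' ord0 i + rho)) by ring.
  by rewrite normrM [`|hh^-1|]gtr0_norm ?invr_gt0 // ler_pdivrMr // mul1r in hd.
apply: le_trans (enorm_le_sum _) _.
apply: le_trans (_ : \sum_(i < d) hh <= _).
  by apply: ler_sum => i _; rewrite !mxE.
rewrite sumr_const card_ord -[hh *+ d]mulr_natr.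
apply: (@le_trans _ _ (hh * (d.+1)%:R)).
  by apply: ler_wpM2l; [exact: ltW hpos | rewrite ler_nat].
have -> : hh * (d.+1)%:R = eps / 2 by rewrite /hh; field.
exact: lexx.
Qed.

Lemma dhh_le : d%:R * hh <= eps / 2.
Proof.
have hpos := hh_gt0.
apply: (@le_trans _ _ (hh * (d.+1)%:R)).
  by rewrite mulrC; apply: ler_wpM2l; [exact: ltW hpos | rewrite ler_nat].
have -> : hh * (d.+1)%:R = eps / 2 by rewrite /hh; field.
exact: lexx.
Qed.

Definition step (a b : 'rV[R]_d) :=
  exists u, K u /\ cell u = cell b /\ enorm (u - a) <= eps / 2.

Lemma step_close a b : K b -> step a b -> enorm (b - a) <= eps.
Proof.
move=> Kb' [u [Ku [cu hu]]].
have h1 := cell_close Kb' Ku (esym cu).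
apply: le_trans (enorm_triangle3 _ u _) _.
lra.
Qed.

Definition Reach (p z : 'rV[R]_d) := exists (x : nat -> 'rV[R]_d) (m : nat),
  [/\ cell (x 0%N) = cell p, (forall j, (j < m)%N -> step (x j) (x j.+1)),
      (forall j, (j <= m)%N -> K (x j)), x m = z &
      (forall i j, (i <= m)%N -> (j <= m)%N -> cell (x i) = cell (x j) -> i = j)].

Lemma reach_refl p : K p -> Reach p p.
Proof.
move=> Kp; exists (fun _ => p), 0%N; split => //.
by move=> i j; rewrite !leqn0 => /eqP -> /eqP ->.
Qed.

Lemma reach_ext p y z : Reach p y -> K z -> enorm (z - y) <= eps / 2 -> Reach p z.
Proof.
move=> [x [m [c0 st Kx xm inj]]] Kz hz.
case: (pselect (exists i, (i <= m)%N /\ cell (x i) = cell z)) => [[i [im ci]]|no].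
- pose x' := fun j => if j == i then z else x j.
  have cx' k : cell (x' k) = cell (x k).
    by rewrite /x'; case: eqP => // ->; rewrite ci.
  exists x', i; split.
  + by rewrite cx'.
  + move=> j ji; rewrite /x'.
    have -> : (j == i) = false by apply/negbTE; rewrite neq_ltn ji.
    have [/eqP e|ne] := boolP (j.+1 == i).
      have [u [Ku [cu hu]]] := st j (leq_trans ji im).
      by exists u; split => //; split => //; rewrite cu -ci e.
    by apply: st; apply: leq_trans ji im.
  + move=> j ji; rewrite /x'; case: eqP => // _; apply: Kx; exact: leq_trans ji im.
  + by rewrite /x' eqxx.
  + move=> a b ai bi; rewrite !cx'; apply: inj; exact: leq_trans _ im.
- pose x' := fun j => if j == m.+1 then z else x j.
  exists x', m.+1; split.
  + by rewrite /x'.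
  + move=> j jm; rewrite /x'.
    have -> : (j == m.+1) = false by apply/negbTE; rewrite neq_ltn jm.
    rewrite ltnS leq_eqVlt in jm; case/orP: jm => [/eqP ->|jm].
      by rewrite eqxx; exists z; split => //; split => //; rewrite xm.
    have -> : (j.+1 == m.+1) = false by apply/negbTE; rewrite eqSS neq_ltn jm.
    exact: st.
  + move=> j jm; rewrite /x'; case: eqP => // /eqP ne; apply: Kx.
    by rewrite -ltnS ltn_neqAle ne jm.
  + by rewrite /x' eqxx.
  + have lem k : (k <= m.+1)%N -> k != m.+1 -> (k <= m)%N.
      by move=> k1 k2; rewrite -ltnS ltn_neqAle k2 k1.
    move=> a b am bm; rewrite /x'.
    case: eqP => [ea|/eqP na]; case: eqP => [eb|/eqP nb].
    * by rewrite ea eb.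
    * by move=> e; exfalso; apply: no; exists b; split; [exact: lem|done].
    * by move=> e; exfalso; apply: no; exists a; split; [exact: lem|done].
    * by apply: inj; exact: lem.
Qed.

Lemma reach_bound p z : Reach p z -> exists (x : nat -> 'rV[R]_d) (m : nat),
  [/\ cell (x 0%N) = cell p, (forall j, (j < m)%N -> step (x j) (x j.+1)),
      (forall j, (j <= m)%N -> K (x j)), x m = z & (m.+1 <= #|{: cellT}|)%N].
Proof.
move=> [x [m [c0 st Kx xm inj]]]; exists x, m; split => //.
pose f := fun j : 'I_m.+1 => cell (x j).
have fi : injective f.
  move=> a b; rewrite /f => e; apply: val_inj => /=.
  by apply: inj => //; rewrite -ltnS.
by have := leq_card f fi; rewrite card_ord.
Qed.

Lemma reach_all p : connected K -> K p -> forall z, K z -> Reach p z.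
Proof.
move=> cK Kp.
have hpos := hh_gt0.
pose T := [set z | K z /\ Reach p z].
have TK : T = K.
  apply: cK.
  - by exists p; split => //; exact: reach_refl.
  - exists (\bigcup_(z in T) ball z hh).
      by apply: bigcup_open => z _; exact: ball_open.
    apply/seteqP; split => y.
      by move=> [Ky Ry]; split => //; exists y => //; exact: ballxx.
    move=> [Ky [z [Kz Rz] bzy]]; split => //.
    apply: reach_ext Rz Ky _.
    by apply: le_trans (ball_enorm bzy) dhh_le.
  - exists (closure T); first exact: closed_closure.
    apply/seteqP; split => y.
      move=> [Ky Ry]; split => // B By.
      by exists y; split; [split | exact: nbhs_singleton].
    move=> [Ky cl]; split => //.
    have [z [[Kz Rz] bz]] := cl _ (nbhsx_ballx y hh hpos).
    apply: reach_ext Rz Ky _.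
    by rewrite enormB; apply: le_trans (ball_enorm bz) dhh_le.
move=> z Kz; have : T z by rewrite TK.
by case.
Qed.

Lemma chain_est p q (F : 'rV[R]_d -> 'rV[R]_d) beta : connected K -> K p -> K q ->
  (forall a b, K a -> K b -> enorm (b - a) <= eps -> enorm (F b - F a) <= beta) ->
  enorm (F q - F p) <= (#|{: cellT}|)%:R * beta.
Proof.
move=> cK Kp Kq HF.
have b0 : 0 <= beta.
  have := HF p p Kp Kp; rewrite subrr enorm0 => h.
  by apply: le_trans (h (ltW eps0)); rewrite subrr enorm0.
have [x [m [c0 st Kx xm bnd]]] := reach_bound (reach_all cK Kp Kq).
have claim j : (j <= m)%N -> enorm (F (x j) - F p) <= (j.+1)%:R * beta.
  elim: j => [|j IH] jm.
    rewrite mul1r; apply: HF => //; first exact: Kx.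
    have := cell_close (Kx 0%N isT) Kp c0; move/le_trans; apply; rewrite ler_pdivrMr // ler_peMr ?(ltW eps0) // ler1n //.
  have jm' : (j < m)%N by [].
  apply: le_trans (enorm_triangle3 _ (F (x j)) _) _.
  rewrite -natr1 mulrDl mul1r addrC lerD //; first by apply: IH; exact: ltnW.
  apply: HF; [apply: Kx; exact: ltnW | exact: Kx | ].
  by apply: step_close; [exact: Kx | exact: st].
have := claim m (leqnn m); rewrite xm => h.
apply: le_trans h _; apply: ler_wpM2r => //; by rewrite ler_nat.
Qed.

End Chain.
Section Deriv.
Context {R : realType} {d : nat}.

Lemma derivable_snd (G : Pt R d -> Pt R d) a v :
  derivable G a v -> derivable (fun p => (G p).2) a v /\
  'D_v (fun p => (G p).2) a = ('D_v G a).2.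
Proof.
move=> /cvg_ex [l hl].
have hs : (fun h : R => h^-1 *: (((fun p => (G p).2) \o shift a) (h *: v) - (G a).2))
  @ 0^' --> l.2.
  have -> : (fun h : R => h^-1 *: (((fun p => (G p).2) \o shift a) (h *: v) - (G a).2)) =
     snd \o (fun h : R => h^-1 *: ((G \o shift a) (h *: v) - G a)) by [].
  apply: cvg_comp hl _; exact: cvg_snd.
split; first by apply/cvg_ex; exists l.2.
rewrite /derive (cvg_lim _ hs) //.
by rewrite (cvg_lim _ hl).
Qed.

Lemma derive_line (G : Pt R d -> 'rV[R]_d) (V a : Pt R d) (t : R) :
  derivable G (t *: V + a) V ->
  derivable (fun s : R => G (s *: V + a)) t 1 /\
  'D_1 (fun s : R => G (s *: V + a)) t = 'D_V G (t *: V + a).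
Proof.
have E : (fun h : R => h^-1 *: (((fun s : R => G (s *: V + a)) \o shift t) (h *: 1)
            - G (t *: V + a))) =
         (fun h : R => h^-1 *: ((G \o shift (t *: V + a)) (h *: V) - G (t *: V + a))).
  apply: funext => h /=; congr (_ *: (G _ - _)).
  by rewrite /shift /= scalerDl addrA; congr (_ *: _ + _ + _); rewrite /GRing.scale /= mulr1.
move=> hd; split.
  by rewrite /derivable E.
by rewrite /derive E.
Qed.

End Deriv.
Fixpoint Hinv (R : realType) (d : nat) (Omega : Type) (theta : R -> Omega -> Omega)
    (ginv : Omega -> Pt R d -> Pt R d) (t1 : R) (n : nat) (w : Omega)
    : Pt R d -> Pt R d :=
  match n with
  | 0 => id
  | n'.+1 => Hinv theta ginv t1 n' w \o ginv (iter n' (theta t1) w)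
  end.

Section Dyn.
Context {R : realType} {d : nat} {Omega : Type} (theta : R -> Omega -> Omega)
  (Gam : R -> Omega -> Pt R d -> Pt R d) (X : Omega -> set (Pt R d))
  (Y : Omega -> set 'rV[R]_d) (t1 : R) (ginv : Omega -> Pt R d -> Pt R d).
Hypothesis shift1 : forall w s y, Y w y -> (Gam t1 w (s, y)).1 = s + 1.
Hypothesis XY : forall w s y, X w (s, y) -> Y w y.
Hypothesis Ximg : forall w, Gam t1 w @` X w = X (theta t1 w).
Hypothesis Ginj : forall w, injective (Gam t1 w).
Hypothesis Gdiff : forall w p, differentiable (Gam t1 w) p.
Hypothesis ginvK : forall w q, Gam t1 w (ginv w q) = q.
Hypothesis ginvc : forall w, continuous (ginv w).

Local Notation H := (Hn theta Gam t1).

Lemma Hn_add a b w p : H (a + b) w p = H b (iter a (theta t1) w) (H a w p).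
Proof.
elim: b => [|b IH]; first by rewrite addn0.
by rewrite addnS /= IH addnC iterD.
Qed.

Lemma Hn_X n w p : X w p ->
  X (iter n (theta t1) w) (H n w p) /\ (H n w p).1 = p.1 + n%:R.
Proof.
move=> Xp; elim: n => [|n [IH1 IH2]]; first by rewrite addr0.
split.
  by rewrite /= -Ximg; exists (H n w p).
move: IH1 IH2 => /=; case: (H n w p) => s y /= Xq ->.
rewrite shift1; [by rewrite -[n.+1]addn1 natrD addrA | exact: XY Xq].
Qed.

Lemma Hn_inj n w : injective (H n w).
Proof.
elim: n => [|n IH] //= p q /Ginj; exact: IH.
Qed.

Lemma Hn_surj n w q : X (iter n (theta t1) w) q -> exists2 p, X w p & H n w p = q.
Proof.
elim: n q => [|n IH] q /=; first by move=> Xq; exists q.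
rewrite -Ximg => -[q' Xq' <-].
by have [p Xp <-] := IH _ Xq'; exists p.
Qed.

Lemma HnK n w q : H n w (Hinv theta ginv t1 n w q) = q.
Proof.
elim: n q => [|n IH] q //=.
by rewrite IH ginvK.
Qed.

Lemma HinvK n w p : Hinv theta ginv t1 n w (H n w p) = p.
Proof. by apply: (@Hn_inj n w); rewrite HnK. Qed.

Lemma Hinv_cont n w : continuous (Hinv theta ginv t1 n w).
Proof.
elim: n => [|n IH] /= x; first exact: cvg_id.
by apply: continuous_comp; [exact: ginvc | exact: IH].
Qed.

Lemma Hn_diff n w p : differentiable (H n w) p.
Proof.
elim: n p => [|n IH] p /=; first exact: ex_diff.
by apply: differentiable_comp; [exact: IH | exact: Gdiff].
Qed.

Lemma block_contr (n0 : nat) lam' eps1 w (a b : Pt R d) : 0 <= lam' ->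
  (forall p, Bnbhd (X w) eps1 p -> forall v,
     enorm (Dy (gn theta Gam t1 n0 w) p v) <= lam' * enorm v) ->
  X w a -> a.1 = b.1 -> enorm (b.2 - a.2) <= eps1 ->
  enorm ((H n0 w b).2 - (H n0 w a).2) <= lam' * enorm (b.2 - a.2).
Proof.
case: a b => [a1 a2] [b1 b2] /=.
move=> l0 good Xa e1 hb.
set v := b2 - a2.
set a := (a1, a2).
pose V : Pt R d := (0, v).
pose G := gn theta Gam t1 n0 w.
have dG q : derivable G q V.
  by have [] := derivable_snd (diff_derivable (Hn_diff n0 w q)) ( v := V).
have Eb : 1 *: V + a = (b1, b2).
  by rewrite scale1r /V /a e1; apply: injective_projections => /=; rewrite ?add0r // /v subrK.
have Ea : 0 *: V + a = a by rewrite scale0r add0r.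
have := @mvt_enorm R d (fun s : R => G (s *: V + a)) (lam' * enorm v).
rewrite Eb Ea; apply.
- by rewrite mulr_ge0 ?enorm_ge0.
- by move=> t; have [] := derive_line (dG (t *: V + a)).
- move=> t /andP[t0 t1'].
  have [_ ->] := derive_line (dG (t *: V + a)).
  apply: good; exists a.2; split.
    have -> : (t *: V + a).1 = a1.
      by change (t *: (0 : R) + a1 = a1); rewrite scaler0 add0r.
    exact: Xa.
  have -> : (t *: V + a).2 - a.2 = t *: v.
    by change (t *: v + a2 - a2 = t *: v); rewrite addrK.
  rewrite enormZ ger0_norm //.
  apply: le_trans hb; rewrite -/v -[leRHS]mul1r ler_wpM2r ?enorm_ge0 //.
Qed.

Lemma blocks (n0 : nat) lam' eps1 w s0 (a b : 'rV[R]_d) k : 0 <= lam' -> lam' <= 1 ->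
  (forall j, (j < k)%N -> forall p,
     Bnbhd (X (iter (j * n0) (theta t1) w)) eps1 p -> forall v,
     enorm (Dy (gn theta Gam t1 n0 (iter (j * n0) (theta t1) w)) p v) <= lam' * enorm v) ->
  X w (s0, a) -> X w (s0, b) -> enorm (b - a) <= eps1 ->
  enorm ((H (k * n0) w (s0, b)).2 - (H (k * n0) w (s0, a)).2) <= lam' ^+ k * enorm (b - a).
Proof.
move=> l0 l1 good Xa Xb hb.
elim: k good => [|k IH] good; first by rewrite mul0n expr0 mul1r.
have IH' := IH (fun j jk => good j (ltnW jk)).
rewrite mulSnr !Hn_add.
have [XA A1] := Hn_X (k * n0) Xa.
have [XB B1] := Hn_X (k * n0) Xb.
set A := H (k * n0) w (s0, a) in XA A1 IH' *.
set B := H (k * n0) w (s0, b) in XB B1 IH' *.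
have ek : lam' ^+ k <= 1 by rewrite exprn_ile1.
have hB : enorm (B.2 - A.2) <= eps1.
  apply: le_trans IH' _; apply: le_trans hb.
  by rewrite -[leRHS]mul1r ler_wpM2r ?enorm_ge0.
apply: le_trans (block_contr l0 (good k (ltnSn k)) XA _ hB) _.
  by rewrite A1 B1.
by rewrite exprS -mulrA ler_wpM2l.
Qed.

Lemma core (w' : Omega) (k n0 : nat) s (y y' : 'rV[R]_d) (C : set 'rV[R]_d)
    lam' eps1 rho :
  0 < eps1 -> 0 <= lam' -> lam' <= 1 ->
  (forall j, (j < k)%N -> forall p,
     Bnbhd (X (iter (j * n0) (theta t1) w')) eps1 p -> forall v,
     enorm (Dy (gn theta Gam t1 n0 (iter (j * n0) (theta t1) w')) p v) <= lam' * enorm v) ->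
  (forall z, Y w' z -> enorm z <= rho) ->
  connected C -> C `<=` fiber (X (iter (k * n0) (theta t1) w')) s -> C y -> C y' ->
  enorm (y' - y) <= (#|{: @cellT R d rho eps1}|)%:R * (lam' ^+ k * eps1).
Proof.
move=> e0 l0 l1 good Yb cC CX Cy Cy'.
set m := (k * n0)%N.
pose Inv := Hinv theta ginv t1 m w'.
pose phi := fun y1 : 'rV[R]_d => (Inv (s, y1)).2.
set s' := s - m%:R.
have F1 y1 : C y1 -> X w' (s', phi y1) /\ H m w' (s', phi y1) = (s, y1).
  move=> Cy1; have [[p1 p2] Xp Hp] := Hn_surj (CX _ Cy1).
  have Ip : Inv (s, y1) = (p1, p2) by rewrite /Inv -Hp HinvK.
  have [_ e] := Hn_X m Xp; rewrite Hp /= in e.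
  have -> : (s', phi y1) = (p1, p2) by rewrite /phi Ip /s' e addrK.
  by [].
pose K := phi @` C.
have cK : connected K.
  apply: connected_continuous_connected cC _.
  have c1 : continuous (fun y1 : 'rV[R]_d => ((s, y1) : (R * 'rV[R]_d)%type)).
    move=> x; have h := @cvg_pair _ _ _ (nbhs x) (nbhs s) (nbhs x) _ _ _
      (fun _ => s) id (cvg_cst s) cvg_id.
    by apply: h; exact: nbhs_filter.
  have c2 : continuous (Inv \o (fun y1 : 'rV[R]_d => ((s, y1) : Pt R d))).
    by move=> x; apply: continuous_comp; [exact: c1 | exact: Hinv_cont].
  apply: continuous_subspaceT => x.
  have := @continuous_comp _ _ _ _ snd x (c2 x) cvg_snd.
  by move=> h; apply: h; exact: nbhs_filter.
have Kb z : K z -> forall i, `|z ord0 i| <= rho.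
  move=> [y1 Cy1 <-] i; apply: le_trans (coord_le_enorm _ _) _.
  by apply: Yb; apply: (XY (F1 _ Cy1).1).
pose F := fun z => (H m w' (s', z)).2.
have HF a b : K a -> K b -> enorm (b - a) <= eps1 -> enorm (F b - F a) <= lam' ^+ k * eps1.
  move=> [ya Cya <-] [yb Cyb <-] hab.
  apply: le_trans (blocks l0 l1 good (F1 _ Cya).1 (F1 _ Cyb).1 hab) _.
  by apply: ler_wpM2l; [exact: exprn_ge0 | exact: hab].
have := chain_est e0 Kb cK (ex_intro2 _ _ y Cy erefl) (ex_intro2 _ _ y' Cy' erefl) HF.
by rewrite /F (F1 _ Cy).2 (F1 _ Cy').2.
Qed.

End Dyn.
Section Bad.
Context {R : realType} {d : nat} {dO : measure_display} {Omega : measurableType dO}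
  (Y : Omega -> set 'rV[R]_d).

Definition DD : R := 2 * (d.+1)%:R.
Definition qv (c : {ffun 'I_d -> int}) : 'rV[R]_d := \row_i ((c i)%:~R / DD).

Lemma DD_gt0 : 0 < DD.
Proof. by rewrite /DD mulr_gt0 // ltr0n. Qed.

Lemma qv_approx y : exists c, enorm (qv c - y) <= 1 / 2.
Proof.
have D0 := DD_gt0.
exists [ffun i => Num.floor (y ord0 i * DD)].
apply: le_trans (enorm_le_sum _) _.
apply: (@le_trans _ _ (\sum_(i < d) DD^-1)).
  apply: ler_sum => i _; rewrite !mxE ffunE.
  have h1 := real_floor_le (num_real (y ord0 i * DD)).
  have h2 := real_floorD1_gt (num_real (y ord0 i * DD)).
  rewrite intrD in h2.
  set f := (Num.floor _)%:~R in h1 h2 *.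
  have e1 : f / DD <= y ord0 i by rewrite ler_pdivrMr.
  have e2 : y ord0 i < (f + 1) / DD by rewrite ltr_pdivlMr.
  rewrite mulrDl in e2.
  rewrite ler_norml; apply/andP; split; lra.
rewrite sumr_const card_ord -[DD^-1 *+ d]mulr_natr.
apply: (@le_trans _ _ (DD^-1 * (d.+1)%:R)).
  by apply: ler_wpM2l; [rewrite invr_ge0 ltW | rewrite ler_nat].
have -> : DD^-1 * (d.+1)%:R = 1 / 2 by rewrite /DD; field.
exact: lexx.
Qed.

Definition bad (n : nat) : set Omega :=
  \bigcup_(c in [set: {ffun 'I_d -> int}])
    [set w | n%:R - 1 < enorm (qv c) /\ dist_rv (qv c) (Y w) < 1].

Lemma dist_le x (K : set 'rV[R]_d) k : K k -> dist_rv x K <= enorm (x - k).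
Proof.
move=> Kk; rewrite /dist_rv; apply: ge_inf; last by exists k.
by exists 0 => _ [k' _ <-]; exact: enorm_ge0.
Qed.

Lemma dist_lt x (K : set 'rV[R]_d) : K !=set0 -> dist_rv x K < 1 ->
  exists2 k, K k & enorm (x - k) < 1.
Proof.
move=> [k0 Kk0] /inf_lt []; first by exists (enorm (x - k0)), k0.
by move=> r [k Kk <-] h; exists k.
Qed.

Hypothesis Ycomp : forall w, Y w !=set0 /\ compact (Y w).
Hypothesis Ymeas : forall x : 'rV[R]_d, measurable_fun setT (fun w => dist_rv x (Y w)).

Lemma bad_meas n : measurable (bad n).
Proof.
apply: countable_bigcupT_measurable => // c.
case: (pselect (n%:R - 1 < enorm (qv c))) => h.
  have -> : [set w | n%:R - 1 < enorm (qv c) /\ dist_rv (qv c) (Y w) < 1] =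
     setT `&` (fun w => dist_rv (qv c) (Y w)) @^-1` `]-oo, 1[.
    apply/seteqP; split => w /=.
      by move=> [_ h2]; split => //; rewrite /= in_itv /=.
    by move=> [_]; rewrite /= in_itv /=.
  by apply: Ymeas => //; exact: measurable_itv.
have -> : [set w | n%:R - 1 < enorm (qv c) /\ dist_rv (qv c) (Y w) < 1] = set0.
  by apply/seteqP; split => w // [].
exact: measurable0.
Qed.

Lemma bad_decr : nonincreasing_seq bad.
Proof.
move=> n m nm; rewrite subsetEset => w [c _ [h1 h2]]; exists c => //; split => //.
apply: le_lt_trans h1; rewrite lerD2r ler_nat //.
Qed.

Lemma not_bad n w : ~ bad n w -> forall z, Y w z -> enorm z <= n%:R.
Proof.
move=> nb z Yz; rewrite leNgt; apply/negP => hz; apply: nb.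
have [c hc] := qv_approx z.
exists c => //; split.
  have := enorm_triangle3 z (qv c) 0; rewrite !subr0 => h'.
  have h'' : enorm (z - qv c) = enorm (qv c - z) := enormB _ _.
  lra.
apply: le_lt_trans (dist_le _ Yz) _; lra.
Qed.

Lemma bad_cap : \bigcap_n bad n = set0.
Proof.
apply/seteqP; split => w // hw.
have [_ cY] := Ycomp w.
have /compact_bounded [M [_ HM]] := cY.
have hM := HM (M + 1) (ltr_pwDr ltr01 (lexx M)).
pose n := Num.truncn (d%:R * (M + 1) + 3).
have [c _ [h1 h2]] := hw n I.
have [y Yy hy] := dist_lt (Ycomp w).1 h2.
have hy' : enorm y <= d%:R * (M + 1).
  apply: le_trans (enorm_le_sum _) _.
  apply: (@le_trans _ _ (\sum_(i < d) (M + 1))).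
    apply: ler_sum => i _; apply: le_trans (coord_le_mxnorm _ _) _.
    exact: hM.
  by rewrite sumr_const card_ord mulr_natl.
have : enorm (qv c) <= enorm (qv c - y) + enorm (y - 0).
  by have := enorm_triangle3 (qv c) y 0; rewrite !subr0.
rewrite subr0 => h3.
have : d%:R * (M + 1) + 3 < n.+1%:R by exact: truncnS_gt.
rewrite -natr1; lra.
Qed.

End Bad.
Lemma iter_theta (R : realType) (Omega : Type) (theta : R -> Omega -> Omega) (t1 : R) :
  (forall w, theta 0 w = w) ->
  (forall t u w, theta (t + u) w = theta t (theta u w)) ->
  forall n w, iter n (theta t1) w = theta (n%:R * t1) w.
Proof.
move=> th0 thadd; elim => [|n IH] w /=; first by rewrite mul0r th0.
by rewrite IH -thadd -natr1 mulrDl mul1r addrC.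
Qed.

Lemma exists_small (R : realType) (z eps : R) : 0 <= z -> z < 1 -> 0 < eps ->
  exists k : nat, z ^+ k < eps.
Proof.
move=> z0 z1 e0.
have hz : `|z| < 1 by rewrite ger0_norm.
have [N _ HN] := cvg_expr hz (nbhsx_ballx 0 eps e0).
exists N; have := HN N (leqnn N).
by rewrite /= /ball /= sub0r normrN ger0_norm ?exprn_ge0.
Qed.

Theorem lemma3p2 (R : realType) (d : nat) (dO : measure_display)
    (Omega : measurableType dO) (P : probability Omega R)
    (theta : R -> Omega -> Omega) (Gam : R -> Omega -> Pt R d -> Pt R d)
    (Y : Omega -> set 'rV[R]_d) (X : Omega -> set (Pt R d))
    (t1 bstar delta1 L1 lam eps1 : R) (n0 : nat) :
  metric_dynamical_system P theta ->
  C1_perfect_cocycle theta Gam ->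
  cond_i theta Gam Y X t1 bstar ->
  cond_ii X delta1 L1 ->
  cond_iii P theta Gam X t1 lam eps1 n0 ->
  forall l : R, 0 < l ->
    P.-negligible [set w | (l%:E <= Gsize (X w))%E].
Proof.
move=> [thm [thp [th0 thadd]]] [_ [_ [_ [_ [diffeo _]]]]].
move=> [[Ycomp Ymeas] [t1pos [shiftY [_ [XY [Ximg [_ [_ _]]]]]]]] _.
move=> [lam1 [e1pos [ae _]]] l l0.
have [ginv hg] := choice (fun w => diffeo w t1).
have shift1 w s y : Y w y -> (Gam t1 w (s, y)).1 = s + 1 by move=> /(shiftY w s) [].
have Ximg1 w : Gam t1 w @` X w = X (theta t1 w) := Ximg t1 w.
have Ginj w : injective (Gam t1 w) := can_inj (hg w).1.
have Gdiff w p : differentiable (Gam t1 w) p := (hg w).2.2.1.1 p.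
have ginvK w q : Gam t1 w (ginv w q) = q := (hg w).2.1 q.
have ginvc w : continuous (ginv w).
  by move=> x; apply: differentiable_continuous; exact: ((hg w).2.2.2.1 x).
have XY' w s y : X w (s, y) -> Y w y := XY w s y.
have [lam' [l0' [l1' hl]]] : exists lam' : R, [/\ 0 <= lam', lam' < 1 & lam <= lam'].
  case: (leP 0 lam) => h; [exists lam | exists 0]; split => //; lra.
have [N0 [mN0 PN0 sub0]] := ae.
pose good w := forall p, Bnbhd (X w) eps1 p -> forall v : 'rV[R]_d,
   enorm (Dy (gn theta Gam t1 n0 w) p v) <= lam' * enorm v.
have goodN0 w : ~ N0 w -> good w.
  move=> nN p Bp v; have : ~ (~` [set x | forall p, Bnbhd (X x) eps1 p ->
     forall v : 'rV[R]_d, enorm (Dy (gn theta Gam t1 n0 x) p v) <= lam * enorm v]) w.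
    by move=> h; apply: nN; apply: sub0.
  move=> /contrapT h; apply: le_trans (h p Bp v) _.
  by apply: ler_wpM2r; [exact: enorm_ge0 | exact: hl].
pose NN := \bigcup_(j in [set: nat]) (theta (- (j%:R * t1)) @^-1` N0).
have preM t (A : set Omega) : measurable A -> measurable (theta t @^-1` A).
  by move=> mA; rewrite -[_ @^-1` _]setTI; apply: thm.
have negN : P.-negligible NN.
  apply: negligible_bigcup => j; exists (theta (- (j%:R * t1)) @^-1` N0); split => //.
    exact: preM.
  exact: (etrans (thp _ _ mN0) PN0).
have itE := iter_theta t1 th0 thadd.
have kex n : exists k : nat,
    (#|{: @cellT R d n%:R eps1}|)%:R * (lam' ^+ k * eps1) < l.
  have cpos : 0 < (#|{: @cellT R d n%:R eps1}|)%:R :> R.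
    by rewrite ltr0n; apply/card_gt0P; exists [ffun => ord0].
  have ce : 0 < (#|{: @cellT R d n%:R eps1}|)%:R * eps1 by rewrite mulr_gt0.
  have pos : 0 < l / ((#|{: @cellT R d n%:R eps1}|)%:R * eps1) by rewrite divr_gt0.
  have [k hk] := exists_small l0' l1' pos.
  by exists k; rewrite mulrCA -ltr_pdivlMr.
have [kk hkk] := choice kex.
pose mm n := (kk n * n0)%N.
pose pre n := theta (- ((mm n)%:R * t1)) @^-1` bad Y n.
have measB n : measurable (bad Y n) by apply: bad_meas.
have incl : [set w | (l%:E <= Gsize (X w))%E] `<=` NN `|` \bigcap_n pre n.
  move=> w /= hw.
  case: (pselect (NN w)) => [hN|hN]; first by left.
  right => n _.
  rewrite /pre /=; apply: contrapT => nb.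
  set w' := theta (- ((mm n)%:R * t1)) w in nb.
  have Yb := not_bad nb.
  have iw : iter (mm n) (theta t1) w' = w.
    by rewrite itE /w' -thadd subrr th0.
  have : ((l / 2)%:E < Gsize (X w))%E.
    apply: lt_le_trans hw; rewrite lte_fin; lra.
  move=> /ereal_sup_gt [r [s [y0 [Xy0 ->]]]] /ereal_sup_gt [r' [y [y' [Cy [Cy' ->]]]]].
  rewrite lte_fin => hyy.
  have cC : connected (connected_component (fiber (X w) s) y0).
    exact: component_connected.
  have CX : connected_component (fiber (X w) s) y0 `<=` fiber (X w) s.
    exact: connected_component_sub.
  have goodj j : (j < kk n)%N -> good (iter (j * n0) (theta t1) w').
    move=> jk; apply: goodN0 => hN0; apply: hN.
    exists (mm n - j * n0)%N => //.
    rewrite /= itE /w' -thadd in hN0.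
    have jm : (j * n0 <= mm n)%N by rewrite /mm leq_mul2r ltnW ?orbT.
    by rewrite natrB // mulrBl opprB addrC /= addrC.
  have := core shift1 XY' Ximg1 Ginj Gdiff ginvK ginvc e1pos l0' (ltW l1') goodj Yb cC
    (_ : _ `<=` fiber (X (iter (kk n * n0) (theta t1) w')) s) Cy Cy'.
  rewrite -/(mm n) iw => /(_ CX) h.
  have := hkk n; rewrite enormB in h; lra.
apply: (negligibleS incl); apply: negligibleU => //.
have mI : measurable (\bigcap_n pre n).
  by apply: bigcapT_measurable => n; exact: preM.
apply/negligibleP => //.
apply/eqP; rewrite eq_le measure_ge0 andbT.
have cvgB := nonincreasing_cvg_mu (mu := P) (F := bad Y)
  (le_lt_trans (probability_le1 P (measB 0%N)) (ltry _)) measB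
  (bigcapT_measurable measB) (@bad_decr R d dO Omega Y).
rewrite (bad_cap Ycomp) measure0 in cvgB.
have : (P (\bigcap_n pre n) <= lim (P \o bad Y @ \oo))%E.
  apply: lime_ge; first by apply/cvg_ex; exists 0%E.
  near=> n.
  rewrite /= -(thp (- ((mm n)%:R * t1)) _ (measB n)).
  apply: le_measure; rewrite ?inE //; first exact: preM.
  exact: bigcap_inf.
by rewrite (cvg_lim _ cvgB).
Unshelve. all: by end_near.
Qed.
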